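(* Let $p\geq 1$ and let $\mathcal{A}$ be an $n$-dimensional naturally graded $p$-filiform associative algebra over $\mathbb{C}$, identified with its natural grading $\mathcal{A}=\bigoplus_{i\geq 1}\mathcal{A}_i$. Suppose $\{e_1,\dots,e_{n-p},f_1,\dots,f_p\}$ is a basis of $\mathcal{A}$ such that $e_1\in\mathcal{A}_1$, $e_1e_i=e_{i+1}$ for $1\leq i\leq n-p-1$, $e_1e_{n-p}=0$, $e_1f_j=0$ for $1\leq j\leq p$, $e_i\in\mathcal{A}_i$ for $1\leq i\leq n-p$, and each $f_i$ is homogeneous with $f_i\in\mathcal{A}_{r_i}$, where $r_1\leq r_2\leq\dots\leq r_p\leq n-p$. Then $r_s\leq s$ for every $s\in\{1,2,\dots,p\}$.
   Context: All algebras are finite-dimensional associative algebras over $\mathbb{C}$. For an algebra $\mathcal{A}$ put $\mathcal{A}^1=\mathcal{A}$ and $\mathcal{A}^{i+1}=\sum_{k=1}^{i}\mathcal{A}^k\mathcal{A}^{i+1-k}$; $\mathcal{A}$ is nilpotent if $\mathcal{A}^i=0$ for some $i$. For nilpotent $\mathcal{A}$ with nilindex $k$ (i.e. $\mathcal{A}^k\neq 0=\mathcal{A}^{k+1}$), set $\mathcal{A}_i=\mathcal{A}^i/\mathcal{A}^{i+1}$ and $\operatorname{gr}\mathcal{A}=\mathcal{A}_1\oplus\dots\oplus\mathcal{A}_k$, a graded algebra with $\mathcal{A}_i\mathcal{A}_j\subseteq\mathcal{A}_{i+j}$; $\mathcal{A}$ is naturally graded if $\mathcal{A}\cong\operatorname{gr}\mathcal{A}$,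 in which case $\mathcal{A}$ is identified with $\bigoplus_i\mathcal{A}_i$ (so $\mathcal{A}_i\mathcal{A}_j\subseteq\mathcal{A}_{i+j}$ and $\mathcal{A}^m=\bigoplus_{i\geq m}\mathcal{A}_i$). For $x\in\mathcal{A}$, $L_x:\mathcal{A}\to\mathcal{A}$, $z\mapsto xz$. For $x\in\mathcal{A}\setminus\mathcal{A}^2$, $C(x)$ is the decreasing sequence of sizes of the Jordan blocks of $L_x$; sequences are ordered lexicographically, and the characteristic sequence is $C(\mathcal{A})=\max_{x\in\mathcal{A}\setminus\mathcal{A}^2}C(x)$. $\mathcal{A}$ is $p$-filiform if $C(\mathcal{A})=(n-p,1,\dots,1)$ (with $p$ entries equal to $1$), where $n=\dim\mathcal{A}$. *)

(* Defs.v *)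
(* The field C of complex numbers is rendered as R[i]
   (mathcomp-real-closed's [complex R]) for an arbitrary [R : realType]
   (every realType is a complete archimedean ordered field, i.e. a copy of
   the reals, so R[i] is a copy of C). *)
From HB Require Import structures.
From mathcomp Require Import all_boot all_order all_algebra all_field.
From mathcomp Require Import complex.
From mathcomp Require Import reals.

Set Implicit Arguments.
Unset Strict Implicit.
Unset Printing Implicit Defensive.

Import Order.TTheory GRing.Theory Num.Theory.
Local Open Scope ring_scope.

Section AssocAlgebra.
Variables (F : fieldType) (V : vectType F).
(* A finite-dimensional (not necessarily unital) algebra structure on the
   vector space V is a multiplication  mul : V -> V -> V . *)
Variable mul : V -> V -> V.

Definition is_assoc_algebra : Prop :=
  [/\ forall x, linear (mul x),
      forall y, linear (mul^~ y)
    & forall x y z, mul x (mul y z) = mul (mul x y) z].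

(* product of two subspaces: U W = span { u w | u in U, w in W }
   (by bilinearity, it is spanned by products of basis vectors) *)
Definition prodv (U W : {vspace V}) : {vspace V} :=
  (<< [seq mul u w | u <- vbasis U, w <- vbasis W] >>)%VS.

(* pows m = [:: A^1; A^2; ...; A^m ]   with
   A^1 = A,  A^(i+1) = \sum_{k=1}^{i} A^k A^(i+1-k) *)
Fixpoint pows (m : nat) : seq {vspace V} :=
  match m with
  | 0 => [::]
  | m'.+1 =>
      let s := pows m' in
      rcons s (if m' is 0 then fullv
               else (\sum_(k < m') prodv (nth 0%VS s k) (nth 0%VS s (m' - 1 - k)))%VS)
  end.

Definition apow (m : nat) : {vspace V} := last fullv (pows m).

Definition nilpotent_alg : Prop := exists i, apow i = 0%VS.

Definition Lmul (x : V) : V -> V := mul x.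

Definition natural_grading (G : nat -> {vspace V}) : Prop :=
  [/\ forall i, (i == 0)%N || (\dim (fullv : {vspace V}) < i)%N -> G i = 0%VS,
      directv (\sum_(1 <= i < (\dim (fullv : {vspace V})).+1) G i)%VS,
      forall i j, (prodv (G i) (G j) <= G (i + j)%N)%VS
    & forall m, (1 <= m)%N ->
        apow m = (\sum_(m <= i < (\dim (fullv : {vspace V})).+1) G i)%VS].

End AssocAlgebra.

Section Jordan.
Variables (F : fieldType) (V : vectType F).

(* s is the (decreasing) sequence of sizes of the Jordan blocks of f:
   there are eigenvalues lam b and a basis of V made of chains
   v b 0, ..., v b (s_b - 1) (block b) with
   f (v b t) = lam b * v b t + v b (t+1)   (v b s_b := 0). *)
Definition jordan_type (f : V -> V) (s : seq nat) : Prop :=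
  [/\ sorted geq s, all (fun k => 0 < k)%N s &
      exists (lam : nat -> F) (v : nat -> nat -> V),
        basis_of fullv
          (flatten [seq [seq v b t | t <- iota 0 (nth 0%N s b)]
                      | b <- iota 0 (size s)])
        /\ forall b t, (b < size s)%N -> (t < nth 0%N s b)%N ->
             f (v b t) = lam b *: v b t
                         + (if (t.+1 < nth 0%N s b)%N then v b t.+1 else 0)].
End Jordan.

Fixpoint lex_le (s t : seq nat) : bool :=
  match s, t with
  | [::], _ => true
  | _ :: _, [::] => false
  | a :: s', b :: t' => (a < b)%N || ((a == b) && lex_le s' t')
  end.

Section Filiform.
Variables (F : fieldType) (V : vectType F) (mul : V -> V -> V).

Definition char_seq (c : seq nat) : Prop :=
  (exists2 x, x \notin apow mul 2 & jordan_type (Lmul mul x) c) /\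
  (forall x s, x \notin apow mul 2 -> jordan_type (Lmul mul x) s -> lex_le s c).

Definition p_filiform (p : nat) : Prop :=
  char_seq ((\dim (fullv : {vspace V}) - p)%N :: nseq p 1%N).
End Filiform.

(* Main.v *)
Require Import Defs.
From HB Require Import structures.
From mathcomp Require Import all_boot all_order all_algebra all_field.
From mathcomp Require Import zify.
Import GRing.Theory.
Local Open Scope ring_scope.

Set Implicit Arguments.
Unset Strict Implicit.
Unset Printing Implicit Defensive.
Section Lin.
Variables (F : fieldType) (V : vectType F).

Lemma lin0 (g : V -> V) : linear g -> g 0 = 0.
Proof.
move=> H; have := H 1 0 0; rewrite scale1r addr0 scale1r => E.
by apply: (addrI (g 0)); rewrite addr0 -E.
Qed.

Lemma linD (g : V -> V) : linear g -> forall u v, g (u + v) = g u + g v.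
Proof. by move=> H u v; have := H 1 u v; rewrite !scale1r. Qed.

Lemma linZ (g : V -> V) : linear g -> forall a u, g (a *: u) = a *: g u.
Proof. by move=> H a u; rewrite -[a *: u]addr0 H lin0 // addr0. Qed.

Lemma lin_sum (g : V -> V) I (r : seq I) (P : pred I) (Fi : I -> V) :
  linear g -> g (\sum_(i <- r | P i) Fi i) = \sum_(i <- r | P i) g (Fi i).
Proof.
move=> H; apply: (big_morph g (linD H) (lin0 H)).
Qed.

Lemma lin_span_sub (g : V -> V) (X : seq V) (Z : {vspace V}) :
  linear g -> {in X, forall x, g x \in Z} -> forall v, v \in <<X>>%VS -> g v \in Z.
Proof.
move=> H HX v Hv.
have := @coord_span _ _ _ (in_tuple X) v Hv => ->.
rewrite lin_sum //; apply: rpred_sum => i _.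
rewrite linZ //; apply: memvZ; apply: HX; exact: mem_nth.
Qed.

Lemma id_linear : linear (fun v : V => v).
Proof. by []. Qed.

End Lin.

Section Alg.
Variables (F : fieldType) (V : vectType F) (mul : V -> V -> V).
Hypothesis HA : is_assoc_algebra mul.

Let HL : forall x, linear (mul x). Proof. by case: HA. Qed.
Let HR : forall y, linear (mul^~ y). Proof. by case: HA. Qed.
Let Has : forall x y z, mul x (mul y z) = mul (mul x y) z. Proof. by case: HA. Qed.

Lemma size_pows N : size (pows mul N) = N.
Proof. by elim: N => //= N IH; rewrite size_rcons IH. Qed.

Lemma nth_pows N k : (k < N)%N -> nth 0%VS (pows mul N) k = apow mul k.+1.
Proof.
elim: N => // N IH; rewrite ltnS leq_eqVlt => /orP[/eqP-> | lt].
  by rewrite /= nth_rcons size_pows ltnn eqxx /apow /= last_rcons.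
by rewrite /= nth_rcons size_pows lt IH.
Qed.

Lemma apow1 : apow mul 1 = fullv.
Proof. by []. Qed.

Lemma powsS N : pows mul N.+2 = rcons (pows mul N.+1)
  (\sum_(k < N.+1) Defs.prodv mul (nth 0%VS (pows mul N.+1) k)
        (nth 0%VS (pows mul N.+1) (N.+1 - 1 - k)))%VS.
Proof. by []. Qed.

Lemma apowS N : (0 < N)%N ->
  apow mul N.+1 = (\sum_(k < N) Defs.prodv mul (apow mul k.+1) (apow mul (N - k)))%VS.
Proof.
case: N => // N _; rewrite {1}/apow powsS last_rcons.
apply: eq_bigr => k _; have := ltn_ord k => ?; rewrite !nth_pows //; try lia.
by have -> : ((N.+1 - 1 - k).+1 = N.+1 - k)%N by lia.
Qed.

Lemma mem_prodv (U W : {vspace V}) u w : u \in U -> w \in W -> mul u w \in Defs.prodv mul U W.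
Proof.
move=> Hu Hw; rewrite -(span_basis (vbasisP U)) in Hu.
rewrite -(span_basis (vbasisP W)) in Hw.
apply: (lin_span_sub (g := mul^~ w)) Hu => // x Hx.
apply: (lin_span_sub (g := mul x)) Hw => // y Hy.
by apply: memv_span; apply: allpairs_f.
Qed.

Lemma prodv_sub (U W Z : {vspace V}) :
  (forall u w, u \in U -> w \in W -> mul u w \in Z) -> (Defs.prodv mul U W <= Z)%VS.
Proof.
move=> H; apply/span_subvP => z /allpairsP [[x y] [Hx Hy ->]] /=.
by apply: H; apply: vbasis_mem.
Qed.

Lemma P1 a b u w : (0 < a)%N -> (0 < b)%N -> u \in apow mul a -> w \in apow mul b ->
  mul u w \in apow mul (a + b).
Proof.
case: a => // a; case: b => // b _ _ Hu Hw.
rewrite addSn apowS; last by rewrite addnS.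
have lt : (a < a + b.+1)%N by rewrite addnS ltnS leq_addr.
apply: (subvP (sumv_sup (Ordinal lt) _ (subvv _))) => //=.
have -> : (a + b.+1 - a = b.+1)%N by lia.
exact: mem_prodv.
Qed.

Lemma Lb b : (0 < b)%N -> forall a u w (Z : {vspace V}), (0 < a)%N ->
  u \in apow mul a -> w \in apow mul b ->
  (forall u' w', u' \in apow mul (a + b - 1) -> mul u' w' \in Z) ->
  mul u w \in Z.
Proof.
elim/ltn_ind: b => b IH b0 a u w Z a0 Hu Hw HZ.
case: b IH b0 Hw HZ => // [[|N]] IH _ Hw HZ.
  by apply: HZ; rewrite addn1 subn1.
rewrite apowS // in Hw; case/memv_sumP: Hw => ws Hws ->.
rewrite lin_sum //; apply: rpred_sum => k _.
have := Hws k isT; rewrite /Defs.prodv => Hk.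
apply: (lin_span_sub (g := mul u)) Hk => // z /allpairsP [[x y] [Hx Hy ->]] /=.
rewrite Has.
apply: (IH (N.+1 - k)%N _ _ (a + k.+1)%N) => //.
- by have := ltn_ord k; lia.
- by have := ltn_ord k; lia.
- by rewrite addn_gt0 a0.
- by apply: P1 => //; apply: vbasis_mem.
- exact: vbasis_mem.
- move=> u' w' Hu'; apply: HZ.
  by have -> : (a + N.+2 - 1 = a + k.+1 + (N.+1 - k) - 1)%N by have := ltn_ord k; lia.
Qed.

Lemma Lgen k (Z : {vspace V}) : (0 < k)%N ->
  (forall u w, u \in apow mul k -> mul u w \in Z) -> (apow mul k.+1 <= Z)%VS.
Proof.
move=> k0 H; rewrite apowS //; apply/subv_sumP => c _.
apply: prodv_sub => u w Hu Hw.
have lt := ltn_ord c.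
apply: (@Lb (k - c)%N _ c.+1 u w Z) => //; first lia.
move=> u' w' Hu'; apply: H.
by have <- : (c.+1 + (k - c) - 1 = k)%N by have := ltn_ord c; lia.
Qed.

End Alg.

Section Grad.
Variables (F : fieldType) (V : vectType F) (mul : V -> V -> V) (G : nat -> {vspace V}).
Hypothesis HG : natural_grading mul G.
Local Notation N := (\dim (fullv : {vspace V})).

Lemma G_sub_sum a b d : (a <= d < b)%N -> (G d <= \sum_(a <= i < b) G i)%VS.
Proof.
move=> H; rewrite (big_rem d) ?mem_index_iota //=; exact: addvSl.
Qed.

Lemma apow_sum m : (1 <= m)%N -> apow mul m = (\sum_(m <= i < N.+1) G i)%VS.
Proof. by case: HG => _ _ _ H; apply: H. Qed.

Lemma G_apow m d : (1 <= m <= d)%N -> (d <= N)%N -> (G d <= apow mul m)%VS.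
Proof.
move=> /andP[H1 H2] H3; rewrite apow_sum //; apply: G_sub_sum; lia.
Qed.

Lemma G0 d : (d == 0)%N || (N < d)%N -> G d = 0%VS.
Proof. by case: HG => H _ _ _; apply: H. Qed.

Lemma Dlow m v : (1 <= m)%N -> v \in (\sum_(1 <= i < m) G i)%VS -> v \in apow mul m -> v = 0.
Proof.
move=> m1 HA HB; rewrite apow_sum // in HB.
case: (leqP m N.+1) => Hm; last first.
  by move: HB; rewrite big_geq ?memv0 ?(ltnW Hm) //; move/eqP.
case: HG => _ Hd _ _.
move/directvP: Hd => /= Hd.
rewrite (@big_cat_nat _ _ _ m) //= in Hd.
rewrite [X in _ = X](@big_cat_nat _ _ _ m) //= in Hd.
set A := (\sum_(1 <= i < m) G i)%VS in HA Hd.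
set B := (\sum_(m <= i < N.+1) G i)%VS in HB Hd.
have h1 : (\dim A <= \sum_(1 <= i < m) \dim (G i))%N := dimv_leq_sum _ _ _.
have h2 : (\dim B <= \sum_(m <= i < N.+1) \dim (G i))%N := dimv_leq_sum _ _ _.
have h3 := dimv_sum_cap A B.
have : \dim (A :&: B)%VS = 0%N by lia.
move/eqP; rewrite dimv_eq0 => /eqP H0.
by apply/eqP; rewrite -memv0 -H0 memv_cap HA HB.
Qed.

End Grad.

Section Main.
Variables (F : fieldType) (V : vectType F) (mul : V -> V -> V)
    (G : nat -> {vspace V}) (n p : nat)
    (e f : nat -> V) (r : nat -> nat).
Hypothesis HA : is_assoc_algebra mul.
Hypothesis Hn : \dim (fullv : {vspace V}) = n.
Hypothesis HG : natural_grading mul G.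
Hypothesis HB : basis_of fullv ([seq e i | i <- iota 1 (n - p)] ++ [seq f j | j <- iota 1 p]).
Hypothesis Hee : forall i, (1 <= i <= n - p - 1)%N -> mul (e 1%N) (e i) = e i.+1.
Hypothesis Hen : mul (e 1%N) (e (n - p)%N) = 0.
Hypothesis Hef : forall j, (1 <= j <= p)%N -> mul (e 1%N) (f j) = 0.
Hypothesis He : forall i, (1 <= i <= n - p)%N -> e i \in G i.
Hypothesis Hf : forall j, (1 <= j <= p)%N -> f j \in G (r j).
Hypothesis Hr : forall j, (1 <= j < p)%N -> (r j <= r j.+1)%N.
Hypothesis Hrp : (r p <= n - p)%N.

Let HL : forall x, linear (mul x). Proof. by case: HA. Qed.
Let HR : forall y, linear (mul^~ y). Proof. by case: HA. Qed.
Let Has : forall x y z, mul x (mul y z) = mul (mul x y) z. Proof. by case: HA. Qed.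

Local Notation es := [seq e i | i <- iota 1 (n - p)].
Local Notation X := ([seq e i | i <- iota 1 (n - p)] ++ [seq f j | j <- iota 1 p]).

Definition Sv m := (<< [seq e i | i <- [seq i <- iota 1 (n - p) | (m <= i)%N]]
                    ++ [seq f j | j <- [seq j <- iota 1 p | (m <= r j)%N]] >>)%VS.
Definition Tv m := (<< [seq e i | i <- [seq i <- iota 1 (n - p) | (i < m)%N]]
                    ++ [seq f j | j <- [seq j <- iota 1 p | (r j < m)%N]] >>)%VS.
Definition Ev := (<< es >>)%VS.

Lemma spanX : (<< X >> = fullv)%VS.
Proof. exact: span_basis HB. Qed.

Lemma freeX : free X.
Proof. by case/andP: HB. Qed.

Lemma r_pos j : (1 <= j <= p)%N -> (1 <= r j)%N.
Proof.
move=> Hj; case Hr0: (r j) => [|k] //.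
have Hfj : f j \in X by rewrite mem_cat; apply/orP; right; apply: map_f; rewrite mem_iota; lia.
have := free_not0 freeX Hfj.
have := Hf Hj; rewrite Hr0 (G0 HG) //.
by rewrite memv0 => ->.
Qed.

Lemma r_mono j j' : (1 <= j)%N -> (j <= j')%N -> (j' <= p)%N -> (r j <= r j')%N.
Proof.
move=> H1; elim: j' => [|j' IH] H2 H3; first lia.
case: (ltnP j j'.+1) => H4.
  apply: leq_trans (IH _ _) (Hr _) => //; lia.
by have -> : j = j'.+1 by lia.
Qed.

Lemma r_le j : (1 <= j <= p)%N -> (r j <= n - p)%N.
Proof. move=> H; apply: leq_trans (r_mono _ _ _) Hrp; lia. Qed.

Lemma Sv_apow m : (1 <= m)%N -> (Sv m <= apow mul m)%VS.
Proof.
move=> m1; apply/span_subvP => x; rewrite mem_cat => /orP[] /mapP[i];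
  rewrite mem_filter mem_iota => /andP[H1 H2] ->.
  apply: (subvP (@G_apow _ _ _ _ HG m i _ _)) (He _); lia.
have := @r_le i; move=> Hl.
apply: (subvP (@G_apow _ _ _ _ HG m (r i) _ _)) (Hf _); have := Hl; lia.
Qed.

Lemma Tv_low m : (Tv m <= \sum_(1 <= i < m) G i)%VS.
Proof.
apply/span_subvP => x; rewrite mem_cat => /orP[] /mapP[i];
  rewrite mem_filter mem_iota => /andP[H1 H2] ->.
  apply: (subvP (@G_sub_sum _ _ G 1 m i _)) (He _); lia.
have Hl := @r_le i; have Hp := @r_pos i.
apply: (subvP (@G_sub_sum _ _ G 1 m (r i) _)) (Hf _); have := Hl; have := Hp; lia.
Qed.

Lemma full_ST m : (fullv <= Sv m + Tv m)%VS.
Proof.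
rewrite -spanX; apply/span_subvP => x; rewrite mem_cat => /orP[] /mapP[i Hi ->].
  case: (leqP m i) => Hm.
    apply: (subvP (addvSl _ _)); apply: memv_span; rewrite mem_cat; apply/orP; left.
    by apply: map_f; rewrite mem_filter Hm.
  apply: (subvP (addvSr _ _)); apply: memv_span; rewrite mem_cat; apply/orP; left.
  by apply: map_f; rewrite mem_filter Hm.
case: (leqP m (r i)) => Hm.
  apply: (subvP (addvSl _ _)); apply: memv_span; rewrite mem_cat; apply/orP; right.
  by apply: map_f; rewrite mem_filter Hm.
apply: (subvP (addvSr _ _)); apply: memv_span; rewrite mem_cat; apply/orP; right.
by apply: map_f; rewrite mem_filter Hm.
Qed.

Lemma K m : (1 <= m)%N -> (apow mul m <= Sv m)%VS.
Proof.
move=> m1; apply/subvP => v Hv.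
have : v \in (Sv m + Tv m)%VS by apply: (subvP (full_ST m)); exact: memvf.
case/memv_addP => s Hs [t Ht Hst].
have Hsa : s \in apow mul m by apply: (subvP (Sv_apow m1)).
have Hta : t \in apow mul m.
  have -> : t = v - s by rewrite Hst addrC addKr.
  exact: memvB.
have Ht0 := Dlow HG m1 (subvP (Tv_low m) _ Ht) Hta.
by rewrite Hst Ht0 addr0.
Qed.

Lemma e1_mul y : mul (e 1%N) y \in Ev.
Proof.
have : y \in << X >>%VS by rewrite spanX memvf.
apply: lin_span_sub => // x; rewrite mem_cat => /orP[] /mapP[i];
  rewrite mem_iota => /andP[H1 H2] ->.
  case: (ltnP i (n - p)) => H3.
    rewrite Hee; last lia.
    by apply: memv_span; apply: map_f; rewrite mem_iota; lia.
  have -> : i = (n - p)%N by lia.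
  by rewrite Hen mem0v.
by rewrite Hef ?mem0v //; lia.
Qed.

Lemma ei_mul i w : (1 <= i <= n - p)%N -> mul (e i) w \in Ev.
Proof.
elim: i w => [|i IH] w H //.
case: i IH H => [|i] IH H; first exact: e1_mul.
rewrite -Hee; last lia.
by rewrite -Has; apply: e1_mul.
Qed.

Lemma Ev_mul u w : u \in Ev -> mul u w \in Ev.
Proof.
apply: (lin_span_sub (g := mul^~ w)) => // x /mapP[i]; rewrite mem_iota => Hi ->.
apply: ei_mul; lia.
Qed.

Lemma free_contra j : (1 <= j <= p)%N -> f j \notin (Ev + Sv (r j).+1)%VS.
Proof.
move=> Hj.
set rest := es ++ [seq f k | k <- rem j (iota 1 p)].
have Hji : j \in iota 1 p by rewrite mem_iota; lia.
have Hperm : perm_eq X (f j :: rest).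
  apply: perm_trans (_ : perm_eq _ (es ++ f j :: [seq f k | k <- rem j (iota 1 p)])) _.
    by rewrite perm_cat2l; apply: (perm_map f (perm_to_rem Hji)).
  exact/permPl/(perm_catCA es [:: f j] _).
have := freeX; rewrite (perm_free Hperm) free_cons => /andP[Hnot _].
apply: contra Hnot => H; apply: (subvP _ _ H); rewrite subv_add; apply/andP; split.
  by apply: sub_span => x Hx; rewrite mem_cat Hx.
apply: sub_span => x; rewrite mem_cat => /orP[] /mapP[i];
  rewrite mem_filter => /andP[H1 H2] ->.
  by rewrite mem_cat; apply/orP; left; apply: map_f.
rewrite mem_cat; apply/orP; right; apply: map_f.
rewrite (mem_rem_uniq _ (iota_uniq _ _)) inE H2 andbT.
by apply/eqP => E; move: H1; rewrite E ltnn.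
Qed.

Lemma NoGap j : (1 <= j <= p)%N -> (2 <= r j)%N ->
  exists2 j', (1 <= j' <= p)%N & r j' = (r j).-1.
Proof.
move=> Hj H2.
case: (boolP (has (fun j' => r j' == (r j).-1) (iota 1 p))) => [/hasP[j' Hj' /eqP E]|Hno].
  by exists j' => //; move: Hj'; rewrite mem_iota; lia.
exfalso.
set k := (r j).-1.
have k1 : (1 <= k)%N by rewrite /k; lia.
have Hrk : r j = k.+1 by rewrite /k; lia.
have S1 : (apow mul k <= Ev + Sv k.+1)%VS.
  apply: subv_trans (K k1) _.
  apply/span_subvP => x; rewrite mem_cat => /orP[] /mapP[i];
    rewrite mem_filter => /andP[H1 H3] ->.
    apply: (subvP (addvSl _ _)); apply: memv_span; apply: map_f.
    by move: H3; rewrite mem_iota.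
  apply: (subvP (addvSr _ _)); apply: memv_span; rewrite mem_cat; apply/orP; right.
  apply: map_f; rewrite mem_filter H3 andbT.
  rewrite ltn_neqAle H1 andbT eq_sym.
  apply: contra Hno => /eqP E; apply/hasP; exists i => //; apply/eqP; move: E; rewrite /k; lia.
have S2 : (apow mul k.+1 <= Ev + Sv k.+2)%VS.
  apply: (Lgen HA) => // u w Hu.
  have := subvP S1 _ Hu; case/memv_addP => x Hx [y Hy ->].
  rewrite (linD (HR w)); apply: memv_add; first exact: Ev_mul.
  have Hy' : y \in apow mul k.+1 by apply: (subvP (Sv_apow _)).
  have Hw : w \in apow mul 1 by rewrite apow1 memvf.
  have := P1 HA (ltn0Sn _) (ltn0Sn _) Hy' Hw; rewrite addn1 => Hyw.
  exact: (subvP (K _)).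
have Hfj : f j \in (Ev + Sv (r j).+1)%VS.
  rewrite Hrk; apply: (subvP S2); rewrite -Hrk.
  apply: (subvP (@G_apow _ _ _ _ HG _ (r j) _ _)) (Hf Hj).
    by rewrite Hrk; lia.
  rewrite Hn; have := r_le Hj; lia.
by move: (free_contra Hj); rewrite Hfj.
Qed.

Lemma final s : (1 <= s <= p)%N -> (r s <= s)%N.
Proof.
elim: s => [|s IH] Hs; first lia.
case: (leqP (r s.+1) s.+1) => // Hlt.
have [j' Hj' E] := NoGap Hs (ltac:(lia) : (2 <= r s.+1)%N).
case: (leqP j' s) => Hjs.
  have := IH (ltac:(lia)); have := r_mono (ltac:(lia) : (1 <= j')%N) Hjs (ltac:(lia)).
  lia.
have := r_mono (ltac:(lia) : (1 <= s.+1)%N) Hjs (ltac:(lia)); lia.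
Qed.

End Main.


Unset Implicit Arguments.
Set Strict Implicit.

From mathcomp Require Import complex.
From mathcomp Require Import reals.
Import Order.TTheory GRing.Theory Num.Theory.

Theorem mainTheorem1 (R : realType) (V : vectType R[i]) (mul : V -> V -> V)
    (G : nat -> {vspace V}) (n p : nat)
    (e f : nat -> V) (r : nat -> nat) :
  is_assoc_algebra mul ->
  \dim (fullv : {vspace V}) = n ->
  (1 <= p)%N ->
  nilpotent_alg mul ->
  natural_grading mul G ->
  p_filiform mul p ->
  basis_of fullv ([seq e i | i <- iota 1 (n - p)] ++ [seq f j | j <- iota 1 p]) ->
  e 1%N \in G 1%N ->
  (forall i, (1 <= i <= n - p - 1)%N -> mul (e 1%N) (e i) = e i.+1) ->
  mul (e 1%N) (e (n - p)%N) = 0 ->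
  (forall j, (1 <= j <= p)%N -> mul (e 1%N) (f j) = 0) ->
  (forall i, (1 <= i <= n - p)%N -> e i \in G i) ->
  (forall j, (1 <= j <= p)%N -> f j \in G (r j)) ->
  (forall j, (1 <= j < p)%N -> (r j <= r j.+1)%N) ->
  (r p <= n - p)%N ->
  forall s, (1 <= s <= p)%N -> (r s <= s)%N.
Proof.
move=> HA Hn Hp Hnil HG Hfil HB He1 Hee Hen Hef He Hf Hr Hrp s Hs.
by apply: (final HA Hn HG HB Hee Hen Hef He Hf Hr Hrp Hs).
Qed.
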